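(* For every $\delta>0$ there exist $n\ge1$, a pool $\mathcal D=\{(p_i,t_i)\}_{i=1}^n$ with $p_i\in[0,1]$, $t_i>0$, and a budget $T>0$, such that the greedy backward selection strategy based on individual accuracies (defined in the context) outputs an ensemble $S$ with majority-voting accuracy $q(S)\le 1/2+\delta$, while there is an index set $\mathcal L\subseteq\{1,\dots,n\}$ with $\sum_{i\in\mathcal L}t_i\le T$ and $q(\mathcal L)\ge 1-\delta$. In other words, the difference between the optimal constrained ensemble accuracy and the accuracy produced by this strategy can be arbitrarily close to $1/2$.
   Context: A pool consists of candidate members $i=1,\dots,n$, each with accuracy $p_i\in[0,1]$ and cost $t_i>0$; a budget $T>0$ is given. For a nonempty index set $\mathcal L$ with $|\mathcal L|=\ell$, the (majority voting) accuracy is $q(\mathcal L)=\sum_{k=\lfloor \ell/2\rfloor+1}^{\ell}\sum_{\mathcal I\subseteq\mathcal L,|\mathcal I|=k}\prod_{i\in\mathcal I}p_i\prod_{j\in\mathcal L\setminus\mathcal I}(1-p_j)$. An index set $\mathcal L$ is feasible if $\sum_{i\in\mathcal L}t_i\le T$. Greedy backward selection by accuracy: start with $S=\{1,\dots,n\}$; while $\sum_{i\in S}t_i>T$ and $|S|>1$, remove from $S$ a member with smallest accuracy $p_i$; afterwards, while $|S|>1$ and removing a member of smallest accuracy strictly increases $q(S)$, remove it; output $S$. *)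

(* Defs.v *)
From HB Require Import structures.
From mathcomp Require Import all_boot all_order all_algebra.
From mathcomp Require Export reals.
Set Implicit Arguments. Unset Strict Implicit. Unset Printing Implicit Defensive.
Import Order.TTheory GRing.Theory Num.Theory.
Local Open Scope ring_scope.

Section Greedy.
Variables (R : numDomainType) (n : nat) (p t : 'I_n -> R) (T : R).

Definition q (L : {set 'I_n}) : R :=
  \sum_(I in powerset L | (#|L|./2 < #|I|)%N)
     ((\prod_(i in I) p i) * \prod_(j in L :\: I) (1 - p j)).

Definition cost (L : {set 'I_n}) : R := \sum_(i in L) t i.

Definition min_acc (S : {set 'I_n}) (i : 'I_n) : bool :=
  (i \in S) && [forall j in S, p i <= p j].

(* phase 1: while cost S > T and |S| > 1, remove a member of smallest accuracy
   (ties broken arbitrarily: all runs are modelled) *)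
Inductive phase1 : {set 'I_n} -> {set 'I_n} -> Prop :=
| phase1_stop (S : {set 'I_n}) : ~ (T < cost S /\ (1 < #|S|)%N) -> phase1 S S
| phase1_step (S : {set 'I_n}) (i : 'I_n) (S' : {set 'I_n}) : T < cost S -> (1 < #|S|)%N -> min_acc S i ->
    phase1 (S :\ i) S' -> phase1 S S'.

Inductive phase2 : {set 'I_n} -> {set 'I_n} -> Prop :=
| phase2_stop_size (S : {set 'I_n}) : (#|S| <= 1)%N -> phase2 S S
| phase2_stop (S : {set 'I_n}) (i : 'I_n) : (1 < #|S|)%N -> min_acc S i -> q (S :\ i) <= q S ->
    phase2 S S
| phase2_step (S : {set 'I_n}) (i : 'I_n) (S' : {set 'I_n}) : (1 < #|S|)%N -> min_acc S i -> q S < q (S :\ i) ->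
    phase2 (S :\ i) S' -> phase2 S S'.

Definition greedy_output (S : {set 'I_n}) : Prop :=
  exists S1, phase1 [set: 'I_n] S1 /\ phase2 S1 S.

End Greedy.

(* Main.v *)
Require Import Defs.
From HB Require Import structures.
From mathcomp Require Import all_boot all_order all_algebra.
From mathcomp Require Import reals.
From mathcomp Require Import ring lra zify.
Import Order.TTheory GRing.Theory Num.Theory.
Local Open Scope ring_scope.

Lemma total_sum (R : numDomainType) (T : finType) (L : {set T}) (c : R) :
  \sum_(I in powerset L) c ^+ #|I| * (1 - c) ^+ #|L :\: I| = 1.
Proof.
have H := @bigA_distr R 0 1 *%R +%R T (fun i => if i \in L then c else 0)
   (fun i => if i \in L then 1 - c else 1).
rewrite big1 in H; last by move=> i _; case: ifP => _; rewrite /= ?add0r //; apply/eqP; rewrite addrC subrK.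
rewrite [RHS]H [RHS](bigID (fun J : {set T} => J \subset L)) /=.
rewrite [X in _ = _ + X]big1; last first.
  move=> J /subsetPn[i iJ iL].
  by rewrite (bigD1 i) //= iJ (negbTE iL) mul0r.
rewrite addr0; apply: eq_big => [J|J]; first by rewrite powersetE.
rewrite powersetE => JL.
rewrite (bigID (mem J)) /=.
rewrite (eq_bigr (fun _ => c)); last by move=> i iJ; rewrite iJ (subsetP JL).
rewrite prodr_const; congr (_ * _).
rewrite (bigID (mem L)) /= [X in _ * X]big1; last first.
  by move=> i /andP[/negbTE iJ /negbTE iL]; rewrite iJ iL.
rewrite mulr1 -prodr_const; apply: eq_big => [i|i]; first by rewrite in_setD.
by rewrite in_setD => /andP[/negbTE -> ->].
Qed.

Lemma maj_bound (R : realFieldType) (T : finType) (L : {set T}) (c : R) (m : nat) :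
  1/2 <= c -> c <= 1 -> #|L| = (2 * m)%N ->
  1 - (4 * c * (1 - c)) ^+ m <=
  \sum_(I in powerset L | (#|L|./2 < #|I|)%N) c ^+ #|I| * (1 - c) ^+ #|L :\: I|.
Proof.
move=> hc1 hc2 hL.
have := @total_sum R T L c.
rewrite (bigID (fun I : {set T} => (#|L|./2 < #|I|)%N)) /= => Ht.
set A := \sum_(I in _ | _) _ in Ht *.
set B := \sum_(I in _ | _) _ in Ht.
set K := (c * (1 - c)) ^+ m.
have c0 : 0 <= c by lra.
have c1 : 0 <= 1 - c by lra.
have hB : B <= \sum_(I in powerset L | ~~ (#|L|./2 < #|I|)%N) K.
  apply: ler_sum => I /andP[]; rewrite powersetE => IL.
  rewrite hL mul2n doubleK -leqNgt => Im.
  have -> : #|L :\: I| = ((m - #|I|) + m)%N.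
    rewrite cardsD (setIidPr IL) hL; lia.
  rewrite exprD /K exprMn.
  apply: (@le_trans _ _ (c ^+ #|I| * (c ^+ (m - #|I|) * (1 - c) ^+ m))).
    apply: ler_wpM2l; first exact: exprn_ge0.
    apply: ler_wpM2r; first exact: exprn_ge0.
    by apply: lerXn2r; rewrite ?nnegrE //; lra.
  by rewrite mulrA -exprD subnKC.
have K0 : 0 <= K by rewrite /K exprn_ge0 // mulr_ge0.
have hS : \sum_(I in powerset L) K = (4 * c * (1 - c)) ^+ m.
  rewrite sumr_const card_powerset hL expnM -[LHS]mulr_natr natrX -exprMn.
  congr (_ ^+ _); ring.
have hS2 : \sum_(I in powerset L) K = \sum_(I in powerset L | (#|L|./2 < #|I|)%N) K
    + \sum_(I in powerset L | ~~ (#|L|./2 < #|I|)%N) K.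
  by rewrite [LHS](bigID (fun I : {set T} => (#|L|./2 < #|I|)%N)).
have hS3 : 0 <= \sum_(I in powerset L | (#|L|./2 < #|I|)%N) K by apply: sumr_ge0.
rewrite -hS.
lra.
Qed.

Lemma bern (R : realFieldType) (x : R) (m : nat) :
  0 <= x -> x <= 1 -> (1 - x) ^+ m * (1 + m%:R * x) <= 1.
Proof.
move=> x0 x1; elim: m => [|m IH]; first by rewrite expr0 mul0r addr0 mul1r.
set a := (1 - x) ^+ m in IH.
have a0 : 0 <= a by rewrite exprn_ge0 // subr_ge0.
have h1 : 0 <= a * (m.+1%:R * (x * x)) by rewrite mulr_ge0 // mulr_ge0 // mulr_ge0.
have -> : (1 - x) ^+ m.+1 * (1 + m.+1%:R * x) =
   a * (1 + m%:R * x) - a * (m.+1%:R * (x * x)).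
  by rewrite exprSr /a -natr1; ring.
lra.
Qed.

Lemma q_single (R : numDomainType) n (p : 'I_n -> R) x : q p [set x] = p x.
Proof.
rewrite /q (bigD1 [set x]) /=; last by rewrite powersetE subxx cards1.
rewrite [X in _ + X]big1 ?addr0; last first.
  move=> I /andP[/andP[]]; rewrite powersetE subset1 => /orP[->//|/eqP ->].
  by rewrite cards0 cards1.
by rewrite big_set1 setDv big_set0 mulr1.
Qed.

Definition pp (R : realFieldType) m (d : R) (i : 'I_(2 * m).+1) : R :=
  if i == ord_max then 1/2 + d else 1/2 + d/2.
Definition tt (R : realFieldType) m (i : 'I_(2 * m).+1) : R :=
  if i == ord_max then (2 * m)%:R else 1.
Arguments pp {R m} d i.
Arguments tt {R m} i.

Lemma two m (S : {set 'I_(2 * m).+1}) : ord_max \in S -> S != [set ord_max] ->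
  exists2 j, j \in S & j != ord_max.
Proof.
move=> hS hne; case: (boolP [exists j in S, j != ord_max]).
  by move=> /existsP[j /andP[]]; exists j.
rewrite negb_exists => /forallP hall; case/negP: hne.
rewrite eqEsubset sub1set hS andbT; apply/subsetP => j jS.
by move: (hall j); rewrite jS /= negbK in_set1.
Qed.
Arguments two {m S}.

Lemma cost_big (R : realFieldType) m (S : {set 'I_(2 * m).+1}) j :
  ord_max \in S -> j \in S -> j != ord_max -> (2 * m)%:R < cost (@tt R m) S.
Proof.
move=> hS jS hj; rewrite /cost (bigD1 ord_max) //= (bigD1 j) /=; last by rewrite jS hj.
rewrite /tt eqxx (negbTE hj).
set s := \sum_(i | _) _.
have : 0 <= s by apply: sumr_ge0 => i _; case: ifP => _ //; rewrite ler0n.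
lra.
Qed.
Arguments cost_big {R m S j}.

Lemma min_not_max (R : realFieldType) m (d : R) (S : {set 'I_(2 * m).+1}) i :
  0 < d -> (1 < #|S|)%N -> min_acc (pp d) S i -> i != ord_max.
Proof.
move=> d0 /card_gt1P[x [y [xS yS xy]]] /andP[_ /forallP hall].
have [j jS hj] : exists2 j, j \in S & j != ord_max.
  case: (eqVneq x ord_max) => hx; last by exists x.
  by exists y => //; rewrite -hx eq_sym.
apply/eqP => hi; move: (hall j); rewrite jS /= /pp hi eqxx (negbTE hj).
lra.
Qed.
Arguments min_not_max {R m d S i}.

Lemma phase1_inv (R : realFieldType) m (d : R) (S S' : {set 'I_(2 * m).+1}) : 0 < d -> ord_max \in S ->
  phase1 (pp d) (@tt R m) (2 * m)%:R S S' -> S' = [set ord_max].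
Proof.
move=> d0 hS H; elim: H hS => {S S'}.
  move=> S hstop hS; apply/eqP; apply/negPn/negP => hne.
  have [j jS hj] := two hS hne.
  apply: hstop; split; first exact: cost_big hS jS hj.
  by apply/card_gt1P; exists ord_max, j; split => //; rewrite eq_sym.
move=> S i S' _ hc hmin _ IH hS; apply: IH.
by rewrite in_setD1 hS andbT eq_sym (min_not_max d0 hc hmin).
Qed.
Arguments phase1_inv {R m d S S'}.

Lemma phase1_ex (R : realFieldType) m (d : R) k (S : {set 'I_(2 * m).+1}) : 0 < d -> (#|S| <= k)%N ->
  ord_max \in S -> phase1 (pp d) (@tt R m) (2 * m)%:R S [set ord_max].
Proof.
move=> d0; elim: k S => [|k IH] S hk hS.
  by move: hk; rewrite leqn0 cards_eq0 => /eqP SE; rewrite SE in_set0 in hS.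
case: (eqVneq S [set ord_max]) => hne.
  rewrite hne; apply: phase1_stop => -[+ _].
  by rewrite /cost big_set1 /tt eqxx ltxx.
have [j jS hj] := two hS hne.
apply: (@phase1_step _ _ _ _ _ S j); first exact: cost_big hS jS hj.
- by apply/card_gt1P; exists ord_max, j; split => //; rewrite eq_sym.
- rewrite /min_acc jS /=; apply/forallP => k'; apply/implyP => _.
  rewrite /pp (negbTE hj); case: ifP => _; lra.
apply: IH; last by rewrite in_setD1 hS andbT eq_sym.
by move: hk; rewrite (cardsD1 j S) jS add1n ltnS.
Qed.

Lemma phase2_inv (R : realFieldType) m (d : R) (S : {set 'I_(2 * m).+1}) :
  phase2 (pp d) [set (@ord_max (2 * m))] S -> S = [set ord_max].
Proof.
move=> H; inversion H; subst => //; by rewrite cards1 in H0.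
Qed.
Arguments phase2_inv {R m d S}.

Theorem proposition2 (R : realType) (delta : R) : 0 < delta ->
  exists (n : nat) (p t : 'I_n -> R) (T : R),
    [/\ (0 < n)%N,
        (forall i, 0 <= p i <= 1),
        (forall i, 0 < t i)
        & 0 < T] /\
    (exists S, greedy_output p t T S) /\
    (forall S, greedy_output p t T S -> q p S <= 1 / 2 + delta) /\
    (exists L : {set 'I_n}, [/\ L != set0, cost t L <= T & 1 - delta <= q p L]).
Proof.
move=> hd.
wlog hd4 : delta hd / delta <= 1/4.
  move=> W; case: (lerP delta (1/4)) => h; first exact: W.
  have [n [p [t [T [H1 [H2 [H3 H4]]]]]]] := W (1/4) ltac:(lra) (lexx _).
  exists n, p, t, T; split => //; split => //; split.
    by move=> S /H3 HS; lra.
  by case: H4 => L [L1 L2 L3]; exists L; split => //; lra.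
pose m := (Num.truncn (delta ^+ 3)^-1).+1.
have hm : (delta ^+ 3)^-1 < m%:R by apply: real_truncnS_gt; rewrite num_real.
have d3 : 0 < delta ^+ 3 by rewrite exprn_gt0.
have hm' : 1 < m%:R * delta ^+ 3.
  by rewrite -(ltr_pM2r d3) mulVf ?gt_eqF in hm.
have m0 : (0 < 2 * m)%N by rewrite muln_gt0.
have T0 : (0 : R) < (2 * m)%:R by rewrite ltr0n.
exists (2 * m).+1, (pp delta), (@tt R m), (2 * m)%:R.
split.
  split => //.
  - by move=> i; rewrite /pp; case: ifP => _; apply/andP; split; lra.
  - by move=> i; rewrite /tt; case: ifP => _ //; rewrite ltr01.
split.
  exists [set ord_max]; exists [set ord_max]; split.
    by apply: (@phase1_ex _ _ _ #|[set: 'I_(2 * m).+1]|) => //; rewrite in_setT.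
  by apply: phase2_stop_size; rewrite cards1.
split.
  move=> S [S1 [h1 h2]]; rewrite (phase1_inv hd _ h1) ?in_setT // in h2.
  by rewrite (phase2_inv h2) q_single /pp eqxx; lra.
exists [set~ ord_max]; split.
- apply/set0Pn; exists ord0; rewrite in_setC1; apply/eqP => /(congr1 val) /= h.
  by rewrite -h in m0.
- rewrite /cost (eq_bigr (fun _ => 1)); last first.
    by move=> i; rewrite in_setC1 => /negbTE hi; rewrite /tt hi.
  by rewrite sumr_const cardsC1 card_ord /=.
have hL : #|[set~ @ord_max (2 * m)]| = (2 * m)%N by rewrite cardsC1 card_ord.
pose c : R := 1/2 + delta/2.
have -> : q (pp delta) [set~ @ord_max (2 * m)] = \sum_(I in powerset [set~ @ord_max (2 * m)] |
    (#|[set~ @ord_max (2 * m)]|./2 < #|I|)%N) c ^+ #|I| * (1 - c) ^+ #|[set~ @ord_max (2 * m)] :\: I|.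
  apply: eq_bigr => I /andP[]; rewrite powersetE => IL _.
  rewrite -[c ^+ #|I|]prodr_const -[(1 - c) ^+ _]prodr_const; congr (_ * _); apply: eq_bigr => i hi.
    have : i \in [set~ ord_max] by apply: (subsetP IL).
    by rewrite in_setC1 /pp => /negbTE ->.
  by move: hi; rewrite in_setD in_setC1 => /andP[_ /negbTE hi]; rewrite /pp hi.
have hmb := @maj_bound R _ _ c m ltac:(rewrite /c; lra) ltac:(rewrite /c; lra) hL.
apply: le_trans hmb; rewrite /c.
have e : 4 * (1/2 + delta/2) * (1 - (1/2 + delta/2)) = 1 - delta ^+ 2 by field.
rewrite e.
have hb := @bern R (delta ^+ 2) m (sqr_ge0 delta) ltac:(nra).
set y := (1 - delta ^+ 2) ^+ m in hb *.
have y0 : 0 <= y by rewrite /y exprn_ge0 //; nra.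
nra.
Qed.
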